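(* Let $\epsilon > 0$ and $\delta \in (0,1)$, and set $d = \lceil \ln(1/\delta) \rceil$ and $w = 1 + \lceil e/\epsilon \rceil$. Consider a stream of $N$ records. Each record $r$ has a primary key (record id) $r_0$ and values $r_1,\dots,r_p$ on $p$ searchable attributes $a_1,\dots,a_p$; $\mathcal{D}(a_i)$ denotes the domain of $a_i$. Choose $d \cdot p$ hash functions $h_i^j : \mathcal{D}(a_i) \to \{1,\dots,w\}$, for $i \in \{1,\dots,p\}$ and $j \in \{1,\dots,d\}$, uniformly at random from a pairwise-independent family. Build $p$ arrays $CM_1,\dots,CM_p$, each of size $w \times d$, every cell of which initially holds an empty set of record ids. Each record $r$ is inserted by adding $r_0$ to the cell $CM_i[j, h_i^j(r_i)]$ for every $i \in \{1,\dots,p\}$ and every $j \in \{1,\dots,d\}$. A query $q = (q_1,\dots,q_p)$ consists of one equality predicate $a_i = q_i$ on each of the $p$ attributes. Let $f(q)$ be the number of records $r$ in the stream with $r_i = q_i$ for all $i$. Define the estimate $$\hat f(q) = \left| \bigcap_{i \in \{1,\dots,p\},\, j \in \{1,\dots,d\}} CM_i[j, h_i^j(q_i)] \right|.$$ Then $$\Pr\big(|\hat f(q) - f(q)| \le \epsilon^d (N - f(q)) \le \epsilon^d N\big) \ge 1 - \delta.$$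
   Context: This describes a sketch that extends the Count-min sketch by storing record ids in each cell. The probability is taken over the random choice of the hash functions. Record ids are distinct across records. *)

(* Defs.v *)
From HB Require Import structures.
From mathcomp Require Import all_boot all_order all_algebra.
From mathcomp Require Import reals sequences exp.
Set Implicit Arguments. Unset Strict Implicit. Unset Printing Implicit Defensive.
Import Order.TTheory GRing.Theory Num.Theory.
Local Open Scope ring_scope.

Record record (p : nat) (D : 'I_p -> eqType) (Id : eqType) :=
  Rec { rid : Id; rval : forall i : 'I_p, D i }.

(* The cell CM_i[j, x] after inserting the whole stream s, where
   hij = h_i^j : set (here: list) of the ids of the records r with
   h_i^j(r_i) = x.  Columns {1..w} are represented by 'I_w. *)
Definition cell (p : nat) (D : 'I_p -> eqType) (Id : eqType) (w : nat)
  (s : seq (record D Id)) (i : 'I_p) (hij : D i -> 'I_w) (x : 'I_w) : seq Id :=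
  [seq rid r | r <- s & hij (rval r i) == x].

Definition freq (p : nat) (D : 'I_p -> eqType) (Id : eqType)
  (s : seq (record D Id)) (q : forall i : 'I_p, D i) : nat :=
  count (fun r => [forall i, rval r i == q i]) s.

(* \hat f(q): cardinality of the intersection over all i, j of the cells
   CM_i[j, h_i^j(q_i)]  (all cells only contain ids of the stream). *)
Definition fhat (p d w : nat) (D : 'I_p -> eqType) (Id : eqType)
  (s : seq (record D Id)) (h : forall i : 'I_p, 'I_d -> D i -> 'I_w)
  (q : forall i : 'I_p, D i) : nat :=
  count (fun x => [forall i : 'I_p, forall j : 'I_d,
                     x \in cell s (h i j) (h i j (q i))])
        (undup (map (@rid p D Id) s)).

(* A pairwise-independent (strongly 2-universal) family of hash functions
   A -> {1..w}, indexed by the finite type K (drawing k uniformly from K):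
   for x <> y and any a b, Pr_k[f_k x = a /\ f_k y = b] = 1/w^2. *)
Definition pairwise_indep (w : nat) (A : eqType) (K : finType)
  (fam : K -> A -> 'I_w) : Prop :=
  forall x y : A, x != y -> forall a b : 'I_w,
    (#|[set k | (fam k x == a) && (fam k y == b)]| * w ^ 2 = #|K|)%N.

Definition prob (R : numFieldType) (Omega : finType) (E : pred Omega) : R :=
  #|E|%:R / #|Omega|%:R.

(* The sample space: an independent choice of one member of the family of
   attribute i for each pair (i, j), i.e. of h_i^j. *)
Definition hashes (p d w : nat) (D : 'I_p -> eqType) (K : 'I_p -> finType)
  (fam : forall i : 'I_p, K i -> D i -> 'I_w)
  (omega : {dffun forall ij : 'I_p * 'I_d, K ij.1}) :
  forall i : 'I_p, 'I_d -> D i -> 'I_w :=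
  fun i j => fam i (omega (i, j)).

(* Main.v *)
Require Import Defs.
From HB Require Import structures.
From mathcomp Require Import all_boot all_order all_algebra.
From mathcomp Require Import reals sequences exp.
From mathcomp Require Import ring lra.
Import Order.TTheory GRing.Theory Num.Theory.

Lemma card_family_prod (aT : finType) (rT : aT -> finType) (F : forall x, pred (rT x)) :
  #|(family F : simpl_pred {dffun forall x, rT x})| = (\prod_x #|F x|)%N.
Proof. by rewrite card_family foldrE big_map big_enum. Qed.

Fixpoint inT (T : Type) (x : T) (s : seq T) : Prop :=
  if s is a :: s' then a = x \/ @inT T x s' else False.
Arguments inT {T}.

Lemma count_ext_In (T : Type) (P Q : pred T) s :
  (forall x, inT x s -> P x = Q x) -> count P s = count Q s.
Proof.
elim: s => //= a s IH H; rewrite H; last by left.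
by rewrite IH // => x Hx; apply: H; right.
Qed.

Lemma In_map_mem (T : Type) (U : eqType) (f : T -> U) x s :
  inT x s -> f x \in map f s.
Proof. elim: s => //= a s IH [->|/IH]; rewrite inE ?eqxx // => ->; by rewrite orbT. Qed.

Lemma mem_map_filter (T : Type) (U : eqType) (f : T -> U) g y s :
  y \in map f (filter g s) -> y \in map f s.
Proof.
elim: s => //= a s IH; case: (g a) => /=; rewrite !inE.
  by case/orP=> [->//|/IH ->]; rewrite orbT.
by move/IH ->; rewrite orbT.
Qed.

Lemma uniq_map_filter_mem (T : Type) (U : eqType) (f : T -> U) (g : pred T) x s :
  inT x s -> uniq (map f s) -> (f x \in map f (filter g s)) = g x.
Proof.
elim: s => //= a s IH Hx /andP[Ha Hu].
case: Hx => [<- | Hx].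
  case: (g a) => /=; first by rewrite inE eqxx.
  by apply/negbTE; apply: contra Ha; apply: mem_map_filter.
have Hne : f x != f a.
  by apply: contraNneq Ha => <-; apply: In_map_mem.
case: (g a) => /=; rewrite ?inE ?(negbTE Hne) /=; exact: IH.
Qed.

Lemma cardP_sum (T : finType) (P : T -> bool) : #|[pred k | P k]| = (\sum_k (P k : nat))%N.
Proof. rewrite -sum1_card big_mkcond /=; apply: eq_bigr => k _; rewrite inE; by case: (P k). Qed.

Lemma card_set_sum (T : finType) (P : T -> bool) : #|[set k | P k]| = (\sum_k (P k : nat))%N.
Proof. rewrite -sum1_card big_mkcond /=; apply: eq_bigr => k _; rewrite inE; by case: (P k). Qed.
Lemma pair_coll w (A : eqType) (K : finType) (fam : K -> A -> 'I_w) x y :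
  pairwise_indep fam -> x != y -> (#|[pred k | fam k x == fam k y]| * w = #|K|)%N.
Proof.
move=> P xy; case: w fam P => [|w] fam P.
  rewrite muln0; case: (pickP (@predT K)) => [k _ | H]; first by case: (fam k x) => [] [].
  by rewrite eq_card0.
have E : #|[pred k | fam k x == fam k y]| =
   (\sum_(a : 'I_w.+1) #|[set k | (fam k x == a) && (fam k y == a)]|)%N.
  rewrite cardP_sum (eq_bigr (fun a => \sum_k ((fam k x == a) && (fam k y == a)) : nat)%N);
    last by move=> a _; rewrite card_set_sum.
  rewrite exchange_big /=; apply: eq_bigr => k _.
  rewrite (bigD1 (fam k x)) //= eqxx /= big1 ?addn0; first by rewrite eq_sym.
  by move=> a /negbTE; rewrite eq_sym => ->.
apply/eqP; rewrite -(eqn_pmul2r (ltn0Sn w)) E -mulnA mulnn big_distrl /=.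
rewrite (eq_bigr (fun _ => #|K|)); last by move=> a _; rewrite (P x y xy a a).
by rewrite sum_nat_const card_ord mulnC.
Qed.

Lemma fhat_eq p d w (D : 'I_p -> eqType) (Id : eqType) (s : seq (record D Id))
  (h : forall i : 'I_p, 'I_d -> D i -> 'I_w) q :
  uniq (map (@rid p D Id) s) ->
  fhat s h q = count (fun r => [forall i, forall j, h i j (rval r i) == h i j (q i)]) s.
Proof.
move=> U; rewrite /fhat undup_id // count_map; apply: count_ext_In => r Hr /=.
apply: eq_forallb => i; apply: eq_forallb => j.
by rewrite /cell; apply: uniq_map_filter_mem.
Qed.

Lemma card_dffun_prod (aT : finType) (rT : aT -> finType) :
  #|{dffun forall x, rT x}| = (\prod_x #|rT x|)%N.
Proof. by rewrite card_dep_ffun foldrE big_map big_enum. Qed.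

Lemma bad_card p d w (D : 'I_p -> eqType) (K : 'I_p -> finType)
  (fam : forall i : 'I_p, K i -> D i -> 'I_w) (rv q : forall i, D i) i0 :
  (forall i, pairwise_indep (fam i)) -> rv i0 != q i0 ->
  (#|[pred om : {dffun forall ij : 'I_p * 'I_d, K ij.1} |
      [forall i, forall j, hashes fam om j (rv i) == hashes fam om j (q i)]]| * w ^ d
   <= #|{dffun forall ij : 'I_p * 'I_d, K ij.1}|)%N.
Proof.
move=> Pind ne.
pose F := fun ij : 'I_p * 'I_d => [pred k : K ij.1 | fam ij.1 k (rv ij.1) == fam ij.1 k (q ij.1)].
have -> : #|[pred om : {dffun forall ij : 'I_p * 'I_d, K ij.1} |
      [forall i, forall j, hashes fam om j (rv i) == hashes fam om j (q i)]]|
   = #|(family F : simpl_pred {dffun forall ij : 'I_p * 'I_d, K ij.1})|.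
  apply: eq_card => om; rewrite !inE; apply/forallP/familyP => /= H.
    by case=> i j; have /forallP := H i; apply.
  by move=> i; apply/forallP => j; apply: (H (i, j)).
rewrite card_family_prod card_dffun_prod.
rewrite (eq_bigr (fun x => #|F (x.1, x.2)|)); last by case.
rewrite [X in (_ <= X)%N](eq_bigr (fun x => #|K (x.1, x.2).1|)); last by case.
rewrite -(pair_big xpredT xpredT (fun i j => #|F (i, j)|)) /=.
rewrite -(pair_big xpredT xpredT (fun i j => #|K (i, j).1|)) /=.
rewrite (bigD1 i0) //= [X in (_ <= X)%N](bigD1 i0) //=.
rewrite mulnAC; apply: leq_mul.
  have -> : (w ^ d = \prod_(j < d) w)%N by rewrite prod_nat_const card_ord.
  rewrite -big_split /=; apply/eq_leq/eq_bigr => j _.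
  exact: pair_coll.
by apply: leq_prod => i _; apply: leq_prod => j _; apply: max_card.
Qed.

Lemma sum_count_le (Om : finType) (T : Type) (P : Om -> pred T) (Q : pred T) c k s :
  (forall r, #|[pred om | P om r]| * k <= Q r * c)%N ->
  ((\sum_om count (P om) s) * k <= count Q s * c)%N.
Proof.
move=> H; elim: s => [|a s IH] /=; first by rewrite big1.
rewrite big_split /= mulnDl mulnDl; apply: leq_add => //.
by rewrite -cardP_sum.
Qed.

Local Open Scope ring_scope.

Theorem lemma3p2 (R : realType) (eps delta : R) (d w p : nat)
  (D : 'I_p -> eqType) (Id : eqType) (K : 'I_p -> finType)
  (fam : forall i : 'I_p, K i -> D i -> 'I_w)
  (s : seq (record D Id)) (q : forall i : 'I_p, D i) :
  0 < eps -> 0 < delta < 1 ->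
  d%:Z = Num.ceil (ln (delta^-1)) ->
  w%:Z = 1 + Num.ceil (expR 1 / eps) ->
  (forall i, (0 < #|K i|)%N) ->
  (forall i, pairwise_indep (fam i)) ->
  uniq (map (@rid p D Id) s) ->
  1 - delta <=
  prob R [pred omega : {dffun forall ij : 'I_p * 'I_d, K ij.1} |
         let h := hashes fam omega in
         let N : R := (size s)%:R in
         let f : R := (freq s q)%:R in
         let fh : R := (fhat s h q)%:R in
         `|fh - f| <= eps ^+ d * (N - f) <= eps ^+ d * N].
Proof.
move=> eps0 /andP[del0 del1] hd hw K0 Pind U.
set Om := ({dffun forall ij : 'I_p * 'I_d, K ij.1}).
set G := [pred omega : Om | _].
pose M := fun r : record D Id => [forall i, rval r i == q i].
pose B := fun (om : Om) (r : record D Id) =>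
  [forall i, forall j, hashes fam om j (rval r i) == hashes fam om j (q i)].
pose X := fun om : Om => count (fun r => ~~ M r && B om r) s.
pose m := count (predC M) s.
have fhE om : fhat s (hashes fam om) q = (freq s q + X om)%N.
  rewrite fhat_eq // /freq /X -/M.
  have E0 : count (predI M (fun r => ~~ M r && B om r)) s = 0%N.
    by rewrite (@eq_count _ _ pred0) ?count_pred0 // => r /=; case: (M r).
  transitivity (count (predU M (fun r => ~~ M r && B om r)) s); last first.
    by rewrite -[LHS]addn0 -E0 count_predUI.
  apply: eq_count => r /=.
  case Mr: (M r) => /=; last by [].
  apply/forallP => i; apply/forallP => j; move/forallP: Mr => /(_ i) /eqP ->; exact: eqxx.
have sizeE : size s = (freq s q + m)%N by rewrite /m /freq -/M count_predC.
have Xm om : (X om <= m)%N by apply: sub_count => r /andP[].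
have Ssum : ((\sum_om X om) * w ^ d <= m * #|Om|)%N.
  apply: (@sum_count_le Om _ (fun om r => ~~ M r && B om r) (predC M)) => r.
  case Mr: (M r) => /=.
    by rewrite eq_card0 // => om; rewrite !inE Mr.
  have [i0 Hi0] : exists i0, rval r i0 != q i0 by move/negbT/forallPn: Mr.
  rewrite Mr mul1n; apply: leq_trans (@bad_card p d w D K fam (rval r) q i0 Pind Hi0).
  rewrite leq_mul2r; apply/orP; right; apply/subset_leq_card/subsetP => om.
  by rewrite !inE.
have e1 (a b : nat) : ((a + b)%N%:R - a%:R : R) = b%:R by rewrite natrD addrC addKr.
have ed0 : 0 <= eps ^+ d by rewrite exprn_ge0 // ltW.
have GE om : (om \in G) = ((X om)%:R <= eps ^+ d * m%:R).
  rewrite inE /= fhE sizeE !e1 ger0_norm ?ler0n //.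
  have -> : (eps ^+ d * m%:R <= eps ^+ d * (freq s q + m)%N%:R) = true.
    by apply: ler_wpM2l => //; rewrite ler_nat leq_addl.
  by rewrite andbT.
have n0 : (0 < #|Om|)%N by rewrite card_dffun_prod prodn_gt0 // => x; exact: K0.
have cG : #|G| = (#|Om| - #|[predC G]|)%N by rewrite -(cardC G) addnK.
have nbn : (#|[predC G]| <= #|Om|)%N by rewrite -(cardC G) leq_addl.
have key : (#|[predC G]|%:R : R) <= delta * #|Om|%:R.
  have Gc om : (om \in [predC G]) = ~~ ((X om)%:R <= eps ^+ d * m%:R) by rewrite -GE.
  have [m0|mpos] := posnP m.
    rewrite eq_card0 ?mul0r; first by apply: mulr_ge0; [apply: ltW | apply: ler0n].
    move=> om; apply/negbTE; rewrite Gc negbK m0 mulr0.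
    by have := Xm om; rewrite m0 leqn0 => /eqP ->.
  have Hb : #|[predC G]|%:R * (eps ^+ d * m%:R) <= (\sum_om X om)%:R :> R.
    rewrite natr_sum mulr_natl -sumr_const.
    apply: le_trans (_ : \sum_(om in [predC G]) (X om)%:R <= _).
      by apply: ler_sum => om; rewrite Gc -ltNge => /ltW.
    rewrite [X in _ <= X](bigID (fun om => om \in [predC G])) /= lerDl.
    by apply: sumr_ge0 => *; apply: ler0n.
  have Hs : (\sum_om X om)%:R * (w%:R ^+ d) <= m%:R * #|Om|%:R :> R.
    by rewrite -natrX -!natrM ler_nat.
  have hw' : (w%:R : R) = 1 + (Num.ceil (expR 1 / eps))%:~R.
    by rewrite -[w%:R]/((w%:Z)%:~R) hw intrD.
  have hd' : (d%:R : R) = (Num.ceil (ln delta^-1))%:~R.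
    by rewrite -[d%:R]/((d%:Z)%:~R) hd.
  have Hew : delta^-1 <= (eps * w%:R) ^+ d.
    have hp : delta^-1 \in Num.pos by rewrite posrE invr_gt0.
    rewrite -{1}(lnK hp).
    apply: (@le_trans _ _ (expR (d%:R * 1))).
      by rewrite ler_expR mulr1 hd' ceil_ge.
    rewrite expRM_natl; apply: lerXn2r; rewrite ?nnegrE ?expR_ge0 ?mulr_ge0 ?ler0n ?ltW //.
    have c1 := ceil_ge (expR 1 / eps).
    have : eps * (1 + expR 1 / eps) <= eps * w%:R.
      by apply: ler_wpM2l; [apply: ltW | rewrite hw' lerD2l].
    have -> : eps * (1 + expR 1 / eps) = eps + expR 1 by field; rewrite gt_eqF.
    lra.
  set nb : R := #|[predC G]|%:R.
  have H1 : nb * (eps * w%:R) ^+ d * m%:R <= m%:R * #|Om|%:R.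
    apply: le_trans Hs; rewrite exprMn.
    have -> : nb * (eps ^+ d * w%:R ^+ d) * m%:R = (nb * (eps ^+ d * m%:R)) * w%:R ^+ d by ring.
    by apply: ler_wpM2r => //; apply: exprn_ge0; apply: ler0n.
  have H2 : nb * (eps * w%:R) ^+ d <= #|Om|%:R.
    by move: H1; rewrite [m%:R * _]mulrC ler_pM2r ?ltr0n.
  have H3 : nb / delta <= #|Om|%:R.
    by apply: le_trans H2; apply: ler_wpM2l => //; apply: ler0n.
  by move: H3; rewrite ler_pdivrMr // mulrC.
rewrite /prob cG natrB // ler_pdivlMr ?ltr0n //.
nra.
Qed.
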